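(* Consider a one-step MDP ($T=1$) with a single state $\mathcal{S}=\{s_0\}$, action space equal to the goal space $\mathcal{A}=\mathcal{G}$ with $|\mathcal{A}|=|\mathcal{G}|=k$, and reward $r(s,a,g)=\mathbb{I}[a=g]$. Let the policy be $\pi(a\mid s_0,g)=\exp(L_{a,g})/\sum_{b\in\mathcal{A}}\exp(L_{b,g})$ with logits $L_{a,g}$, let $p(g)=1/k$ for all $g$, and suppose $L_{a,g}\equiv L$ for all $a,g$ (some constant $L$). Let $\eta_{a,g}=r(s_0,b,g')\frac{\partial}{\partial L_{a,g}}\log\pi(b\mid s_0,g')$ with $g'\sim p(\cdot)$, $b\sim\pi(\cdot\mid s_0,g')$ be the one-sample on-policy REINFORCE estimator. Let the hindsight variational distribution $q_h$ (with an on-policy buffer) generate a pair $(b,g')$ as follows: sample $g\sim p(\cdot)$ and $b\sim\pi(\cdot\mid s_0,g)$, then choose the goal $g'$ for which the sampled action is rewarding, i.e. $r(s_0,b,g')=1$ (so $g'=b$). Define the normalized hindsight estimator $\eta^h_{a,g}=r(s_0,b,g')\,\frac{\partial}{\partial L_{a,g}}\log\pi(b\mid s_0,g')/k$ with $(b,g')\sim q_h$. For a random variable $x$ define $\mathrm{MSE}[x]:=\mathbb{E}[(x-\mathbb{E}[\eta_{a,g}])^2]$. Then for every $a\in\mathcal{A}$ and $g\in\mathcal{G}$, as $k\to\infty$, $$\frac{\sqrt{\mathrm{MSE}[\eta^h_{a,g}]}}{\big|\mathbb{E}[\eta_{a,g}]\big|}=\sqrt{k}\,(1+o(1)).$$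
   Context: $o(1)$ denotes a quantity tending to $0$ as $k\to\infty$. *)

(* Defs.v *)
From HB Require Import structures.
From mathcomp Require Import all_boot all_order all_algebra.
From mathcomp Require Import all_classical all_reals all_analysis.
Set Implicit Arguments. Unset Strict Implicit. Unset Printing Implicit Defensive.
Import Order.TTheory GRing.Theory Num.Theory.
Local Open Scope ring_scope.

Section HER.
Variable R : realType.
Variable k : nat.

(* Logits L_{a,g}: first argument the action a, second the goal g.
   Actions = goals = 'I_k, single state s0 (left implicit). *)
Definition logits := 'I_k -> 'I_k -> R.

Definition reward (a g : 'I_k) : R := (a == g)%:R.

Definition policy (L : logits) (b g : 'I_k) : R :=
  expR (L b g) / \sum_(c < k) expR (L c g).

Definition pgoal (g : 'I_k) : R := k%:R^-1.

Definition perturb (L : logits) (a g : 'I_k) (t : R) : logits :=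
  fun b h => L b h + (if (b == a) && (h == g) then t else 0).

Definition score (L : logits) (a g b g' : 'I_k) : R :=
  derive1 (fun t : R => ln (policy (perturb L a g t) b g')) 0.

Definition eta (L : logits) (a g b g' : 'I_k) : R :=
  reward b g' * score L a g b g'.

Definition E_eta (L : logits) (a g : 'I_k) : R :=
  \sum_(g' < k) \sum_(b < k) pgoal g' * policy L b g' * eta L a g b g'.

Definition eta_h (L : logits) (a g b g' : 'I_k) : R :=
  reward b g' * score L a g b g' / k%:R.

(* hindsight relabeling: the goal for which action b is rewarding (g' = b) *)
Definition relabel (b : 'I_k) : 'I_k := b.

Definition MSE_h (L : logits) (a g : 'I_k) : R :=
  \sum_(g0 < k) \sum_(b < k)
    pgoal g0 * policy L b g0 * (eta_h L a g b (relabel b) - E_eta L a g) ^+ 2.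

Definition her_ratio (L : logits) (a g : 'I_k) : R :=
  Num.sqrt (MSE_h L a g) / `|E_eta L a g|.

End HER.

(* Main.v *)
Require Import Defs.
From HB Require Import structures.
From mathcomp Require Import all_boot all_order all_algebra.
From mathcomp Require Import all_classical all_reals all_analysis.
From mathcomp Require Import ring lra.
Import Order.TTheory GRing.Theory Num.Theory.
Import numFieldNormedType.Exports.
Local Open Scope classical_set_scope.
Local Open Scope ring_scope.

Section S.
Variable R : realType.

Lemma sum_ind k (j : 'I_k) (F : 'I_k -> R) :
  \sum_(i < k) (i == j)%:R * F i = F j.
Proof.
rewrite (bigD1 j) //= eqxx mul1r big1 ?addr0 // => i /negbTE ->; exact: mul0r.
Qed.

Lemma sum_expR_ind k (a : 'I_k) (d t : R) :
  \sum_(c < k) expR (((c == a)%:R * d) * t) = expR (d * t) + (k.-1)%:R.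
Proof.
rewrite (bigD1 a) //= eqxx mul1r; congr (_ + _).
rewrite (eq_bigr (fun _ => 1)); last by move=> i /negbTE ->; rewrite mul0r mul0r expR0.
by rewrite sumr_const cardC1 card_ord.
Qed.

Lemma is_derive_lin (c : R) : is_derive (0:R) 1 (fun t : R => c * t) c.
Proof.
have H := is_deriveZ c (is_derive_id (0:R) 1).
rewrite (_ : (fun t => c*t) = c \*: (fun x => x)); last by apply/funext.
apply: is_derive_eq H _; exact: mulr1.
Qed.

Lemma score_cst k (L0 : R) (a g b g' : 'I_k) :
  score (fun _ _ => L0) a g b g' = (g' == g)%:R * ((b == a)%:R - k%:R^-1).
Proof.
have k0 : (0 < k)%N by case: k a {b g g'} => [[]|].
rewrite /score.
set d := ((g' == g)%:R : R).
have -> : (fun t : R => ln (policy (perturb (fun _ _ => L0) a g t) b g')) =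
  (fun t => ((b == a)%:R * d) * t - ln (expR (d * t) + (k.-1)%:R)).
  apply/funext => t; rewrite /policy /perturb.
  have E c : expR (L0 + (if (c == a) && (g' == g) then t else 0))
     = expR L0 * expR (((c == a)%:R * d) * t).
    by rewrite -expRD /d; case: (c == a); case: (g' == g); rewrite ?mul1r ?mul0r.
  under eq_bigr do rewrite E.
  rewrite E -mulr_sumr sum_expR_ind invfM mulrACA mulfV ?(gt_eqF (expR_gt0 L0)) // mul1r.
  rewrite ln_div ?posrE ?expR_gt0 //; last first.
    by rewrite (lt_le_trans (expR_gt0 (d*t))) // lerDl ler0n.
  by rewrite expRK.
set c := ((b == a)%:R * d).
have gpos : 0 < expR (d * 0) + k.-1%:R.
  by rewrite (lt_le_trans (expR_gt0 (d*0))) // lerDl ler0n.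
have H1 := is_derive_lin c.
have H2 := is_derive_lin d.
have H3 : is_derive (0:R) 1 (fun t : R => expR (d * t) + k.-1%:R) (expR (d * 0) * d).
  have HD := is_deriveD (is_derive1_comp (is_derive_expR (d*0)) H2) (is_derive_cst (k.-1%:R : R) (0:R) 1).
  apply: is_derive_eq HD _.
  by rewrite addr0.
have H4 : is_derive (0:R) 1 (fun t : R => ln (expR (d * t) + k.-1%:R))
    ((expR (d * 0) + k.-1%:R)^-1 * (expR (d * 0) * d)).
  have HH := (@is_derive1_comp R (@ln R) (fun t => expR (d * t) + k.-1%:R) 0 _ _ (is_derive1_ln gpos) H3).
  exact HH.
have H := is_deriveB H1 H4.
rewrite -/(derive1 _ 0) derive1E (@derive_val _ _ _ _ _ _ _ H).
rewrite mulr0 expR0 (_ : 1 + k.-1%:R = k%:R :> R); last by rewrite addrC natr1 prednK.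
by rewrite /c mul1r mulrBr [d * _]mulrC [d * k%:R^-1]mulrC.
Qed.

Lemma policy_cst k (L0 : R) (b g : 'I_k) : policy (fun _ _ => L0) b g = k%:R^-1.
Proof.
rewrite /policy /= sumr_const card_ord -[expR L0 *+ k]mulr_natr invfM mulrA mulfV ?mul1r //.
by rewrite gt_eqF ?expR_gt0.
Qed.

Lemma E_eta_cst k (L0 : R) (a g : 'I_k) :
  E_eta (fun _ _ => L0) a g = k%:R^-1 * k%:R^-1 * ((g == a)%:R - k%:R^-1).
Proof.
rewrite /E_eta.
under eq_bigr => g' _.
  under eq_bigr => b _.
    rewrite /Defs.eta /reward /pgoal policy_cst score_cst.
    rewrite (_ : _ * _ = (b == g')%:R * (k%:R^-1 * k%:R^-1 * ((g' == g)%:R * ((b == a)%:R - k%:R^-1)))); last by ring.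
  over.
  rewrite sum_ind.
  rewrite (_ : _ * _ = (g' == g)%:R * (k%:R^-1 * k%:R^-1 * ((g' == a)%:R - k%:R^-1))); last by ring.
over.
by rewrite sum_ind.
Qed.

Lemma MSE_cst k (L0 : R) (a g : 'I_k) :
  MSE_h (fun _ _ => L0) a g = (E_eta (fun _ _ => L0) a g) ^+ 2 * k.-1%:R.
Proof.
have k0 : (0 < k)%N by case: k a {g} => [[]|].
rewrite /MSE_h; set E := E_eta _ a g.
under eq_bigr => g0 _ do under eq_bigr => b _ do
  rewrite /pgoal policy_cst /eta_h /relabel /reward eqxx score_cst.
rewrite sumr_const card_ord (bigD1 g) //= eqxx.
rewrite (eq_bigr (fun _ => k%:R^-1 / k%:R * E^+2)); last by move=> b /negbTE ->; rewrite mul0r mulr0 mul0r sub0r sqrrN.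
rewrite sumr_const cardC1 card_ord /E E_eta_cst.
rewrite -[_ *+ k.-1]mulr_natr -[(_ + _) *+ k]mulr_natr /=.
have -> : k%:R = (k.-1)%:R + 1 :> R by rewrite natr1 prednK.
set m := (k.-1)%:R.
have m0 : m + 1 != 0 by rewrite /m natr1 pnatr_eq0.
set e := ((g == a)%:R : R). move: m0; generalize m e => x y hx. field. exact hx.
Qed.
Lemma ratio_cst k (L0 : R) (a g : 'I_k) : (1 < k)%N ->
  her_ratio (fun _ _ => L0) a g = Num.sqrt (k.-1%:R).
Proof.
move=> k1.
have k0 : k%:R != 0 :> R by rewrite pnatr_eq0 -lt0n ltnW.
have hE : `|E_eta (fun _ _ => L0) a g| != 0; last first.
  by rewrite /her_ratio MSE_cst sqrtrM ?sqr_ge0 // sqrtr_sqr [X in X / _]mulrC mulfK.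
rewrite E_eta_cst normr_eq0 !mulf_neq0 ?invr_eq0 //.
rewrite subr_eq0; case: (g == a) => /=.
  rewrite eq_sym invr_eq1 pnatr_eq1.
  by rewrite gtn_eqF.
by rewrite eq_sym invr_eq0.
Qed.
End S.

Theorem theorem2 (R : realType) (L : R) :
  exists eps : nat -> R, eps @ \oo --> 0 /\
    \forall k \near \oo, forall a g : 'I_k,
      her_ratio (fun _ _ => L) a g = Num.sqrt (k%:R) * (1 + eps k).
Proof.
exists (fun k => Num.sqrt (k.-1%:R / k%:R) - 1); split.
  rewrite -cvg_shiftS.
  have h1 : (fun n => 1 - harmonic n) @ \oo --> (1 - 0 : R).
    apply: cvgB; [exact: cvg_cst | exact: cvg_harmonic].
  have h2 := cvg_comp _ _ h1 (@sqrt_continuous R _).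
  have h3 : (fun n => Num.sqrt (1 - harmonic n) - 1) @ \oo --> (Num.sqrt (1 - 0) - 1 : R).
    by apply: cvgB => //; exact: cvg_cst.
  rewrite subr0 sqrtr1 subrr in h3.
  apply: (cvg_trans _ h3); apply: near_eq_cvg; near=> n => /=.
  congr (Num.sqrt _ - 1).
  have n0 : n.+1%:R != 0 :> R by rewrite pnatr_eq0.
  by rewrite -natr1 in n0 *; field.
exists 2%N => // k /= k2 a g.
rewrite ratio_cst // [1 + _]addrC subrK -sqrtrM ?ler0n // mulrC divfK // pnatr_eq0 -lt0n.
exact: ltnW.
Unshelve. all: by end_near.
Qed.
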